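(* Let $e,m_+,T_+,T_->0$. There exist constants $0<C_1\le C_1'$ and $0<C_2\le C_2'$, depending only on $e,m_+,T_+,T_-$ (in particular independent of $k,\xi$), such that for every $k\in\mathbb{Z}\setminus\{0\}$, $\xi\in\mathbb{R}$ and every solution $A(t)=(A_1(t),A_2(t))^\top\in\mathbb{C}^2$ of $\frac{d}{dt}A=L_+(t)A$ on $[0,\infty)$, the functional $$\mathcal{E}_+(t)=\sqrt{\tfrac{p_1}{m_1}}|A_1|^2+2\frac{h_1}{\sqrt{m_1p_1}}\Re(A_1\bar A_2)+\sqrt{\tfrac{m_1}{p_1}}|A_2|^2$$ satisfies, for all $t\ge0$, $$C_1\mathcal{E}_+(0)\le\mathcal{E}_+(t)\le C_1'\mathcal{E}_+(0),\qquad C_2|A(0)|\le|A(t)|\le C_2'|A(0)|.$$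
   Context: For fixed $k\in\mathbb{Z}\setminus\{0\}$, $\xi\in\mathbb{R}$ let $\alpha(t)=k^2+(\xi-kt)^2$, so $\partial_t\alpha=-2k(\xi-kt)$. Define $h_1(t)=\frac14\alpha^{-1}\partial_t\alpha$, $m_1(t)=\sqrt{\frac{T_+}{m_+}}\alpha^{1/2}$, $p_1(t)=\frac{4\pi e^2}{\sqrt{m_+T_+}}\frac{\alpha^{1/2}}{\alpha+4\pi e^2/T_-}+\sqrt{\frac{m_+}{T_+}}\frac{2k^2}{\alpha^{3/2}}+\sqrt{\frac{T_+}{m_+}}\alpha^{1/2}$, and $$L_+(t)=\begin{pmatrix}-h_1(t) & -m_1(t)\\ p_1(t) & h_1(t)\end{pmatrix}.$$ (This is the Fourier-side symmetrized form, in the sheared coordinates $X=x-yt$, $Y=y$, of the linearized ion Euler–Poisson system around the Couette flow.) *)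

(* Defs.v *)
From Stdlib Require Import Reals.
From Coquelicot Require Import Coquelicot.
Open Scope R_scope.

(* Parameters: e (charge), mp = m_+, Tp = T_+, Tm = T_-; frequency k (integer), xi real. *)
Definition alpha (k : Z) (xi t : R) : R := (IZR k) ^ 2 + (xi - IZR k * t) ^ 2.
Definition dalpha (k : Z) (xi t : R) : R := - 2 * IZR k * (xi - IZR k * t).

Definition h1 (k : Z) (xi t : R) : R := / 4 * / alpha k xi t * dalpha k xi t.

Definition m1 (mp Tp : R) (k : Z) (xi t : R) : R :=
  sqrt (Tp / mp) * sqrt (alpha k xi t).

Definition p1 (e mp Tp Tm : R) (k : Z) (xi t : R) : R :=
  4 * PI * e ^ 2 / sqrt (mp * Tp)
    * (sqrt (alpha k xi t) / (alpha k xi t + 4 * PI * e ^ 2 / Tm))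
  + sqrt (mp / Tp) * (2 * (IZR k) ^ 2 / (sqrt (alpha k xi t) ^ 3))
  + sqrt (Tp / mp) * sqrt (alpha k xi t).

Definition is_solution (e mp Tp Tm : R) (k : Z) (xi : R) (A1 A2 : R -> C) : Prop :=
  (forall t, 0 < t ->
     is_derive A1 t (Cplus (Cmult (RtoC (- h1 k xi t)) (A1 t))
                           (Cmult (RtoC (- m1 mp Tp k xi t)) (A2 t))) /\
     is_derive A2 t (Cplus (Cmult (RtoC (p1 e mp Tp Tm k xi t)) (A1 t))
                           (Cmult (RtoC (h1 k xi t)) (A2 t)))) /\
  filterlim A1 (at_right 0) (locally (A1 0)) /\
  filterlim A2 (at_right 0) (locally (A2 0)).

Definition Energy_plus (e mp Tp Tm : R) (k : Z) (xi : R) (A1 A2 : R -> C) (t : R) : R :=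
  let m := m1 mp Tp k xi t in
  let p := p1 e mp Tp Tm k xi t in
  sqrt (p / m) * (Cmod (A1 t)) ^ 2
  + 2 * h1 k xi t / sqrt (m * p) * Re (Cmult (A1 t) (Cconj (A2 t)))
  + sqrt (m / p) * (Cmod (A2 t)) ^ 2.

Definition normA (A1 A2 : R -> C) (t : R) : R :=
  sqrt ((Cmod (A1 t)) ^ 2 + (Cmod (A2 t)) ^ 2).

(* Main.v *)
Require Import Defs.
From Stdlib Require Import Reals Lra Psatz ZArith.
From Coquelicot Require Import Coquelicot.
Open Scope R_scope.

Definition rc (f : R -> R) := filterlim f (at_right 0) (locally (f 0)).

Lemma rc_plus f g : rc f -> rc g -> rc (fun t => f t + g t).
Proof.
  intros Hf Hg. unfold rc.
  eapply filterlim_comp_2; [exact Hf|exact Hg|exact (filterlim_plus (f 0) (g 0))].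
Qed.

Lemma rc_mult f g : rc f -> rc g -> rc (fun t => f t * g t).
Proof.
  intros Hf Hg. unfold rc.
  eapply filterlim_comp_2; [exact Hf|exact Hg|exact (@filterlim_mult R_AbsRing (f 0) (g 0))].
Qed.

Lemma rc_cont f : continuous f 0 -> rc f.
Proof.
  intros H. unfold rc. eapply filterlim_filter_le_1; [|exact H].
  apply filter_le_within.
Qed.

Lemma rc_ext f g : (forall t, f t = g t) -> rc f -> rc g.
Proof.
  intros E H. unfold rc. replace (g 0) with (f 0) by auto.
  eapply filterlim_ext; [exact E|exact H].
Qed.

Lemma rc_le (h : R -> R) (c t : R) : 0 < t -> rc h -> (forall s, 0 < s < t -> h s <= c) -> h 0 <= c.
Proof.
  intros Ht H Hs. destruct (Rle_dec (h 0) c) as [ok|nok]; [exact ok|exfalso].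
  assert (Heps : 0 < h 0 - c) by lra.
  specialize (H (ball (h 0) (mkposreal _ Heps))).
  assert (HH := H (locally_ball (h 0) (mkposreal _ Heps))).
  destruct HH as [d Hd].
  set (y := Rmin (d/2) (t/2)).
  assert (Hy0 : 0 < y) by (unfold y; destruct d; simpl; apply Rmin_pos; lra).
  assert (Hyd : y <= d/2) by apply Rmin_l.
  assert (Hyt : y <= t/2) by apply Rmin_r.
  assert (Hb : ball 0 d y).
  { unfold ball; simpl; unfold AbsRing_ball, abs, minus, plus, opp; simpl.
    destruct d; simpl in *. rewrite Rabs_right; lra. }
  specialize (Hd y Hb Hy0). unfold ball in Hd; simpl in Hd;
    unfold AbsRing_ball, abs, minus, plus, opp in Hd; simpl in Hd.
  specialize (Hs y ltac:(lra)).
  apply Rabs_def2 in Hd. lra.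
Qed.

Lemma rc_ge (h : R -> R) (c t : R) : 0 < t -> rc h -> (forall s, 0 < s < t -> c <= h s) -> c <= h 0.
Proof.
  intros Ht H Hs.
  assert (H' : rc (fun x => - h x)).
  { eapply rc_ext; [|apply (rc_mult (fun _ => -1) h); [apply rc_cont; apply continuous_const| exact H]].
    intros; simpl; ring. }
  assert (- h 0 <= - c).
  { apply (rc_le (fun x => - h x) (-c) t Ht).
    - exact H'.
    - intros s Hs'. specialize (Hs s Hs'). lra. }
  lra.
Qed.

Lemma deriv_expo (P dP : R -> R) (sg x : R) : is_derive P x (dP x) ->
  is_derive (fun y => exp (sg * P y)) x (sg * dP x * exp (sg * P x)).
Proof.
  intros H.
  assert (H1 : is_derive (fun y => sg * P y) x (sg * dP x)) by (apply is_derive_scal; exact H).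
  pose proof (is_derive_comp exp (fun y => sg * P y) x (exp (sg * P x)) (sg * dP x) (is_derive_exp _) H1) as H2.
  simpl in H2. exact H2.
Qed.

Lemma mono_aux (g dg : R -> R) (s t : R) : 0 < s -> s < t ->
  (forall x, 0 < x -> is_derive g x (dg x)) ->
  exists c, s <= c <= t /\ g t - g s = dg c * (t - s).
Proof.
  intros Hs Hst Hd.
  destruct (MVT_gen g s t dg) as [c [Hc Hc2]].
  - intros x Hx. apply Hd. rewrite Rmin_left in Hx by lra. lra.
  - intros x Hx. rewrite Rmin_left in Hx by lra. rewrite Rmax_right in Hx by lra.
    apply continuity_pt_filterlim. apply (ex_derive_continuous g).
    exists (dg x). apply Hd. lra.
  - rewrite Rmin_left in Hc by lra. rewrite Rmax_right in Hc by lra.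
    exists c. split; auto.
Qed.

Lemma gronwall (f P df dP : R -> R) :
  (forall t, 0 < t -> is_derive f t (df t)) -> (forall t, is_derive P t (dP t)) ->
  (forall t, 0 < t -> Rabs (df t) <= dP t * f t) -> rc f ->
  forall t, 0 <= t -> f t * exp (- P t) <= f 0 * exp (- P 0) /\ f 0 * exp (P 0) <= f t * exp (P t).
Proof.
  intros Hf HP Hb Hrc t Ht.
  assert (Hd : forall sg, forall x, 0 < x -> is_derive (fun y => f y * exp (sg * P y)) x
     (df x * exp (sg * P x) + f x * (sg * dP x * exp (sg * P x)))).
  { intros sg x Hx. apply (is_derive_mult f (fun y => exp (sg * P y))).
    - apply Hf; auto.
    - apply deriv_expo; auto.
    - intros; apply Rmult_comm. }
  assert (Hrc2 : forall sg, rc (fun y => f y * exp (sg * P y))).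
  { intros sg. apply rc_mult; auto. apply rc_cont.
    apply (ex_derive_continuous (fun y => exp (sg * P y))).
    eexists. apply deriv_expo. apply HP. }
  destruct (Rle_lt_or_eq_dec 0 t Ht) as [Ht'|Ht']; [|subst t; lra].
  split.
  - pose proof (rc_ge (fun y => f y * exp (-1 * P y)) (f t * exp (-1 * P t)) t Ht' (Hrc2 (-1))) as K.
    replace (- P t) with (-1 * P t) by ring. replace (- P 0) with (-1 * P 0) by ring.
    apply K. intros s Hs.
    destruct (mono_aux _ _ s t ltac:(lra) ltac:(lra) (Hd (-1))) as [c [Hc Heq]].
    assert (Hb' := Hb c ltac:(lra)).
    assert (0 < exp (-1 * P c)) by apply exp_pos.
    assert (df c <= dP c * f c) by (apply Rle_trans with (Rabs (df c)); [apply Rle_abs|auto]).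
    assert (df c * exp (-1 * P c) + f c * (-1 * dP c * exp (-1 * P c)) <= 0) by nra.
    nra.
  - pose proof (rc_le (fun y => f y * exp (1 * P y)) (f t * exp (1 * P t)) t Ht' (Hrc2 1)) as K.
    replace (P t) with (1 * P t) by ring. replace (P 0) with (1 * P 0) by ring.
    apply K. intros s Hs.
    destruct (mono_aux _ _ s t ltac:(lra) ltac:(lra) (Hd 1)) as [c [Hc Heq]].
    assert (Hb' := Hb c ltac:(lra)).
    assert (0 < exp (1 * P c)) by apply exp_pos.
    assert (- (dP c * f c) <= df c) by (assert (- Rabs (df c) <= df c) by (apply Rabs_maxi_le_r || (pose proof (Rabs_pos (df c)); pose proof (Rle_abs (- df c)); rewrite Rabs_Ropp in *; lra)); lra).
    assert (0 <= df c * exp (1 * P c) + f c * (1 * dP c * exp (1 * P c))) by nra.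
    nra.
Qed.

Lemma deriv_fst (f : R -> C) x (v : C) :
  @is_derive R_AbsRing (prod_NormedModule R_AbsRing R_NormedModule R_NormedModule) f x v ->
  is_derive (fun t => fst (f t)) x (fst v).
Proof.
  intros H. unfold is_derive in *.
  eapply filterdiff_ext_lin.
  - eapply (filterdiff_comp' f (fun z : prod_NormedModule R_AbsRing R_NormedModule R_NormedModule => fst z)); [exact H|].
    apply filterdiff_linear. apply is_linear_fst.
  - intros y. simpl. reflexivity.
Qed.

Lemma deriv_snd (f : R -> C) x (v : C) :
  @is_derive R_AbsRing (prod_NormedModule R_AbsRing R_NormedModule R_NormedModule) f x v ->
  is_derive (fun t => snd (f t)) x (snd v).
Proof.
  intros H. unfold is_derive in *.
  eapply filterdiff_ext_lin.
  - eapply (filterdiff_comp' f (fun z : prod_NormedModule R_AbsRing R_NormedModule R_NormedModule => snd z)); [exact H|].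
    apply filterdiff_linear. apply is_linear_snd.
  - intros y. simpl. reflexivity.
Qed.

Lemma rc_fst (f : R -> C) : filterlim f (at_right 0) (locally (f 0)) ->
  filterlim (fun t => fst (f t)) (at_right 0) (locally (fst (f 0))).
Proof.
  intros H. eapply filterlim_comp; [exact H|].
  apply (linear_cont (K:=R_AbsRing) (U:=prod_NormedModule R_AbsRing R_NormedModule R_NormedModule) (fun z => fst z)).
  apply is_linear_fst.
Qed.
Lemma rc_snd (f : R -> C) : filterlim f (at_right 0) (locally (f 0)) ->
  filterlim (fun t => snd (f t)) (at_right 0) (locally (snd (f 0))).
Proof.
  intros H. eapply filterlim_comp; [exact H|].
  apply (linear_cont (K:=R_AbsRing) (U:=prod_NormedModule R_AbsRing R_NormedModule R_NormedModule) (fun z => snd z)).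
  apply is_linear_snd.
Qed.

Lemma le_div a b c d : 0 < b -> 0 < d -> a * d <= c * b -> a / b <= c / d.
Proof.
  intros Hb Hd H. unfold Rdiv.
  apply Rmult_le_reg_r with (b * d); [nra|].
  replace (a * / b * (b * d)) with (a * d) by (field; lra).
  replace (c * / d * (b * d)) with (c * b) by (field; lra). exact H.
Qed.

Section Bounds.
Variables c B g q a da : R.
Hypotheses (hc : 0 < c) (hB : 0 < B) (hg : 0 < g) (hq : 1 <= q) (ha : q <= a)
  (hda : da ^ 2 <= 4 * q * (a - q)).

Definition Rv := 1 + B / (c * (a + g)) + 2 * q / (c ^ 2 * a ^ 2).
Definition dRv := da * (- B / (c * (a + g) ^ 2) - 4 * q / (c ^ 2 * a ^ 3)).
Definition Mv := c * B * a / (a + g) + 2 * q / a + c ^ 2 * a.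
Definition dMv := da * (c * B * g / (a + g) ^ 2 - 2 * q / a ^ 2 + c ^ 2).
Definition hv := / 4 * / a * da.
Definition dhv := / 4 * (- (da / a ^ 2) * da + / a * (2 * q)).
Definition Rmx := 1 + B / (c * g) + 2 / c ^ 2.

Lemma a_pos : 0 < a. Proof. lra. Qed.

Lemma da_le : Rabs da <= a.
Proof.
  apply Rle_trans with (Rabs a); [apply Rsqr_le_abs_0; unfold Rsqr; pose proof (pow2_ge_0 (a - 2*q)); nra| right; apply Rabs_right; lra].
Qed.

Lemma Rv_ge1 : 1 <= Rv.
Proof.
  unfold Rv. assert (0 < B / (c * (a + g))) by (apply Rdiv_lt_0_compat; nra).
  assert (0 < 2 * q / (c ^ 2 * a ^ 2)) by (apply Rdiv_lt_0_compat; [lra|]; pose proof a_pos; apply Rmult_lt_0_compat; apply pow_lt; lra).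
  lra.
Qed.

Lemma Rv_le : Rv <= Rmx.
Proof.
  unfold Rv, Rmx. pose proof a_pos.
  assert (B / (c * (a + g)) <= B / (c * g)) by (apply le_div; [nra|nra|]; assert (0 < B*c) by nra; nra).
  assert (2 * q / (c ^ 2 * a ^ 2) <= 2 / c ^ 2).
  { apply le_div; [apply Rmult_lt_0_compat; apply pow_lt; lra| apply pow_lt; lra|].
    assert (0 < c^2) by (apply pow_lt; lra). assert (q <= a^2) by nra. assert (2*q*c^2 <= 2*a^2*c^2) by nra. lra. }
  lra.
Qed.

Lemma dRv_bound : Rabs dRv <= (B / c + 4 / c ^ 2) * (q / a).
Proof.
  unfold dRv. pose proof a_pos. pose proof da_le.
  set (T := B / (c * (a + g) ^ 2) + 4 * q / (c ^ 2 * a ^ 3)).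
  assert (HT1 : 0 <= B / (c * (a + g) ^ 2)) by (apply Rlt_le, Rdiv_lt_0_compat; [lra|apply Rmult_lt_0_compat; [lra|apply pow_lt; lra]]).
  assert (HT2 : 0 <= 4 * q / (c ^ 2 * a ^ 3)) by (apply Rlt_le, Rdiv_lt_0_compat; [lra|apply Rmult_lt_0_compat; apply pow_lt; lra]).
  replace (da * (- B / (c * (a + g) ^ 2) - 4 * q / (c ^ 2 * a ^ 3))) with (- (da * T))
    by (unfold T, Rdiv; ring).
  rewrite Rabs_Ropp, Rabs_mult, (Rabs_right T) by (unfold T; lra).
  apply Rle_trans with (a * T); [apply Rmult_le_compat_r; unfold T; lra|].
  unfold T. rewrite Rmult_plus_distr_l.
  assert (E1 : a * (B / (c * (a + g) ^ 2)) <= B / c * (q / a)).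
  { replace (a * (B / (c * (a + g) ^ 2))) with ((a * B) / (c * (a + g) ^ 2)) by (field; nra).
    replace (B / c * (q / a)) with ((B * q) / (c * a)) by (field; nra).
    apply le_div; [apply Rmult_lt_0_compat; [lra|apply pow_lt; lra]|nra|].
    assert (a * a <= (a + g) ^ 2) by nra.
    assert (a * B * (c * a) <= B * q * (c * (a+g)^2)).
    { assert (0 < B * c) by nra. 
      assert (a * a <= q * (a+g)^2) by nra. nra. }
    lra. }
  assert (E2 : a * (4 * q / (c ^ 2 * a ^ 3)) <= 4 / c ^ 2 * (q / a)).
  { assert (0 < c^2) by (apply pow_lt; lra).
    replace (a * (4 * q / (c ^ 2 * a ^ 3))) with ((4 * q) / (c^2 * a^2)) by (field; nra).
    replace (4 / c ^ 2 * (q / a)) with ((4 * q) / (c^2 * a)) by (field; nra).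
    assert (0 < a^2) by nra. apply le_div; [nra|nra|]. assert (a <= a^2) by nra. assert (0 < 4*q*c^2) by nra. nra. }
  lra.
Qed.

Lemma Mv_ge1 : c ^ 2 * a <= Mv.
Proof.
  unfold Mv. pose proof a_pos.
  assert (0 <= c * B * a / (a + g)) by (apply Rlt_le, Rdiv_lt_0_compat; [repeat apply Rmult_lt_0_compat; lra|lra]).
  assert (0 <= 2 * q / a) by (apply Rlt_le, Rdiv_lt_0_compat; lra). lra.
Qed.

Lemma Mv_ge2 : 2 * q / a <= Mv.
Proof.
  unfold Mv. pose proof a_pos.
  assert (0 <= c * B * a / (a + g)) by (apply Rlt_le, Rdiv_lt_0_compat; [repeat apply Rmult_lt_0_compat; lra|lra]).
  assert (0 <= c^2 * a) by (assert (0 < c^2) by (apply pow_lt; lra); nra). lra.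
Qed.

Lemma Mv_pos : 0 < Mv.
Proof. pose proof Mv_ge1. assert (0 < c^2) by (apply pow_lt; lra). pose proof a_pos. nra. Qed.

Lemma hv_sq : 4 * hv ^ 2 <= Mv / 2.
Proof.
  pose proof Mv_ge2. pose proof a_pos.
  unfold hv.
  replace (4 * (/ 4 * / a * da) ^ 2) with (da^2 / (4 * a^2)) by (field; lra).
  apply Rle_trans with (q / a).
  - apply le_div; [nra|lra|]. nra.
  - replace (q / a) with ((2 * q / a) / 2) by (field; lra). lra.
Qed.

Lemma dhv_bound : Rabs dhv <= q / (2 * a).
Proof.
  pose proof a_pos. unfold dhv.
  replace (/ 4 * (- (da / a ^ 2) * da + / a * (2 * q))) with (q / (2 * a) - da^2/(4 * a^2)) by (field; lra).
  assert (0 <= da^2/(4*a^2)) by (apply Rmult_le_pos; [nra| apply Rlt_le, Rinv_0_lt_compat; nra]).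
  assert (da^2/(4*a^2) <= q / a) by (apply le_div; nra).
  assert (q / a = 2 * (q / (2 * a))) by (field; lra).
  apply Rabs_le; lra.
Qed.


Lemma sm_ge (sm : R) : 0 < sm -> sm ^ 2 = Mv -> c <= sm.
Proof.
  intros H1 H2. pose proof Mv_ge1. pose proof a_pos.
  assert (c^2 <= sm^2) by (assert (0 < c^2) by (apply pow_lt; lra); nra).
  nra.
Qed.

Lemma S_sq (sm : R) : 0 < sm -> sm ^ 2 = Mv -> (2 * hv / sm) ^ 2 <= 1.
Proof.
  intros H1 H2. pose proof hv_sq. pose proof Mv_pos.
  replace ((2 * hv / sm) ^ 2) with (4 * hv^2 / sm^2) by (field; lra).
  rewrite H2. replace 1 with (1/1) by field. apply le_div; [lra|lra|]. lra.
Qed.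

Lemma dS_bound (sm : R) : 0 < sm -> sm ^ 2 = Mv ->
  Rabs ((2 * dhv * sm - 2 * hv * (dMv / (2 * sm))) / sm ^ 2) <= (3 / c + B / (c ^ 2 * g)) * (q / a).
Proof.
  intros H1 H2. pose proof (sm_ge sm H1 H2) as Hsm. pose proof a_pos.
  pose proof Mv_ge1. pose proof Mv_ge2. pose proof Mv_pos.
  replace ((2 * dhv * sm - 2 * hv * (dMv / (2 * sm))) / sm ^ 2)
    with (2 * dhv / sm - (hv * dMv) / (sm * sm ^ 2)) by (field; lra).
  rewrite H2.
  eapply Rle_trans; [apply Rabs_triang|]. rewrite Rabs_Ropp.
  assert (T1 : Rabs (2 * dhv / sm) <= (1 / c) * (q / a)).
  { unfold Rdiv at 1. rewrite Rabs_mult, Rabs_mult, Rabs_right by lra.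
    rewrite (Rabs_right (/ sm)) by (apply Rle_ge, Rlt_le, Rinv_0_lt_compat; lra).
    pose proof (dhv_bound). pose proof (Rabs_pos dhv).
    apply Rle_trans with (2 * (q / (2 * a)) * / sm).
    { apply Rmult_le_compat_r; [apply Rlt_le, Rinv_0_lt_compat; lra| lra]. }
    replace (2 * (q / (2 * a)) * / sm) with ((q / a) / sm) by (field; lra).
    replace (1 / c * (q / a)) with ((q/a) / c) by (field; lra).
    apply le_div; [lra|lra|]. assert (0 <= q / a) by (apply Rlt_le, Rdiv_lt_0_compat; lra). nra. }
  set (D2 := da^2 / (4 * a)).
  assert (HD0 : 0 <= D2) by (unfold D2; apply Rmult_le_pos; [nra|apply Rlt_le, Rinv_0_lt_compat; lra]).
  assert (HD1 : D2 <= q) by (unfold D2; replace q with (q / 1) by field; apply le_div; lra || nra).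
  set (t1 := c * B * g / (a + g) ^ 2). set (t2 := 2 * q / a ^ 2).
  assert (Ht1 : 0 <= t1) by (unfold t1; apply Rlt_le, Rdiv_lt_0_compat; [repeat apply Rmult_lt_0_compat; lra|apply pow_lt; lra]).
  assert (Ht2 : 0 <= t2) by (unfold t2; apply Rlt_le, Rdiv_lt_0_compat; [lra|apply pow_lt; lra]).
  assert (Hc2 : 0 < c ^ 2) by (apply pow_lt; lra).
  assert (Hh : hv * dMv = D2 * (t1 - t2 + c ^ 2)).
  { unfold D2, t1, t2, hv, dMv. field. lra. }
  assert (T2 : Rabs (hv * dMv / (sm * Mv)) <= (2 / c + B / (c ^ 2 * g)) * (q / a)).
  { rewrite Hh. unfold Rdiv. rewrite Rabs_mult, Rabs_mult.
    rewrite (Rabs_right D2) by lra.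
    rewrite (Rabs_right (/ (sm * Mv))) by (apply Rle_ge, Rlt_le, Rinv_0_lt_compat; nra).
    apply Rle_trans with (D2 * (t1 + t2 + c^2) * / (sm * Mv)).
    { apply Rmult_le_compat_r; [apply Rlt_le, Rinv_0_lt_compat; nra|].
      apply Rmult_le_compat_l; [lra|]. apply Rabs_le. lra. }
    apply Rle_trans with (q * (t1 + t2 + c^2) * / (sm * Mv)).
    { apply Rmult_le_compat_r; [apply Rlt_le, Rinv_0_lt_compat; nra|].
      apply Rmult_le_compat_r; lra. }
    rewrite !Rmult_plus_distr_l, !Rmult_plus_distr_r.
    assert (U1 : q * t1 * / (sm * Mv) <= B / (c ^ 2 * g) * (q / a)).
    { assert (t1 <= c * B / g).
      { unfold t1. apply le_div; [apply pow_lt; lra|lra|].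
        assert (0 < c * B * g) by (repeat apply Rmult_lt_0_compat; lra).
        assert (g * g <= (a+g)^2) by nra. nra. }
      apply Rle_trans with (q * (c * B / g) * / (c * (c^2 * a))).
      { apply Rmult_le_compat; [nra|apply Rlt_le, Rinv_0_lt_compat; nra|nra|].
        apply Rinv_le_contravar; [apply Rmult_lt_0_compat; nra|]. apply Rmult_le_compat; nra. }
      right. field. repeat split; lra. }
    assert (U2 : q * t2 * / (sm * Mv) <= 1 / c * (q / a)).
    { assert (t2 / Mv <= 1 / a).
      { unfold t2. replace (2 * q / a ^ 2) with ((2 * q / a) / a) by (field; lra).
        apply le_div; [lra|lra|]. replace (2 * q / a / a * a) with (2 * q / a) by (field; lra). lra. }
      replace (q * t2 * / (sm * Mv)) with ((q / sm) * (t2 / Mv)) by (field; nra).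
      replace (1 / c * (q / a)) with ((q / c) * (1 / a)) by (field; lra).
      apply Rmult_le_compat; [apply Rlt_le, Rdiv_lt_0_compat; lra|unfold Rdiv; apply Rmult_le_pos; [lra| apply Rlt_le, Rinv_0_lt_compat; lra]| |lra].
      apply le_div; [lra|lra|]. nra. }
    assert (U3 : q * c ^ 2 * / (sm * Mv) <= 1 / c * (q / a)).
    { apply Rle_trans with (q * c^2 * / (c * (c^2 * a))).
      { apply Rmult_le_compat_l; [nra|]. apply Rinv_le_contravar; [apply Rmult_lt_0_compat; nra|]. apply Rmult_le_compat; nra. }
      right. field. repeat split; lra. }
    lra. }
  replace (hv * dMv / (sm * Mv)) with (hv * dMv / (sm * Mv)) in T2 by reflexivity.
  assert (Habs : (3 / c + B / (c ^ 2 * g)) * (q / a) = 1 / c * (q / a) + (2 / c + B / (c ^ 2 * g)) * (q / a)) by (field; lra).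
  lra.
Qed.

End Bounds.

Lemma E_deriv (r S w a1 b1 a2 b2 : R -> R) t dr dS dw da1 db1 da2 db2 :
  is_derive r t dr -> is_derive S t dS -> is_derive w t dw ->
  is_derive a1 t da1 -> is_derive b1 t db1 -> is_derive a2 t da2 -> is_derive b2 t db2 ->
  is_derive (fun t => r t * (a1 t ^ 2 + b1 t ^ 2) + S t * (a1 t * a2 t + b1 t * b2 t) + w t * (a2 t ^ 2 + b2 t ^ 2)) t
    (dr * (a1 t ^ 2 + b1 t ^ 2) + r t * (2 * a1 t * da1 + 2 * b1 t * db1)
     + (dS * (a1 t * a2 t + b1 t * b2 t) + S t * (da1 * a2 t + a1 t * da2 + db1 * b2 t + b1 t * db2))
     + (dw * (a2 t ^ 2 + b2 t ^ 2) + w t * (2 * a2 t * da2 + 2 * b2 t * db2))).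
Proof.
  intros H1 H2 H3 H4 H5 H6 H7. auto_derive.
  - repeat split; eexists; eassumption.
  - replace (Derive (fun x => r x) t) with dr by (symmetry; apply is_derive_unique; exact H1).
    replace (Derive (fun x => S x) t) with dS by (symmetry; apply is_derive_unique; exact H2).
    replace (Derive (fun x => w x) t) with dw by (symmetry; apply is_derive_unique; exact H3).
    replace (Derive (fun x => a1 x) t) with da1 by (symmetry; apply is_derive_unique; exact H4).
    replace (Derive (fun x => b1 x) t) with db1 by (symmetry; apply is_derive_unique; exact H5).
    replace (Derive (fun x => a2 x) t) with da2 by (symmetry; apply is_derive_unique; exact H6).
    replace (Derive (fun x => b2 x) t) with db2 by (symmetry; apply is_derive_unique; exact H7).
    ring.
Qed.

Lemma E_cancel r S w m p h a1 b1 a2 b2 dr dS dw :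
  r * m = w * p -> S * p = 2 * h * r -> S * m = 2 * h * w ->
  let da1 := - h * a1 - m * a2 in let db1 := - h * b1 - m * b2 in
  let da2 := p * a1 + h * a2 in let db2 := p * b1 + h * b2 in
  dr * (a1 ^ 2 + b1 ^ 2) + r * (2 * a1 * da1 + 2 * b1 * db1)
     + (dS * (a1 * a2 + b1 * b2) + S * (da1 * a2 + a1 * da2 + db1 * b2 + b1 * db2))
     + (dw * (a2 ^ 2 + b2 ^ 2) + w * (2 * a2 * da2 + 2 * b2 * db2))
  = dr * (a1 ^ 2 + b1 ^ 2) + dS * (a1 * a2 + b1 * b2) + dw * (a2 ^ 2 + b2 ^ 2).
Proof.
  intros E1 E2 E3 da1 db1 da2 db2. unfold da1, db1, da2, db2.
  transitivity (dr * (a1 ^ 2 + b1 ^ 2) + dS * (a1 * a2 + b1 * b2) + dw * (a2 ^ 2 + b2 ^ 2)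
    + (a1^2 + b1^2) * (S * p - 2 * h * r) + (a2^2+b2^2) * (2 * h * w - S * m)
    + 2 * (a1 * a2 + b1 * b2) * (w * p - r * m)); [ring|].
  rewrite E1, E2, E3. ring.
Qed.

Lemma sqrt_ids m p : 0 < m -> 0 < p ->
  sqrt (p / m) * m = sqrt (m / p) * p /\ sqrt (p / m) * sqrt (m * p) = p /\
  sqrt (m / p) * sqrt (m * p) = m /\ sqrt (p / m) * sqrt (m / p) = 1.
Proof.
  intros Hm Hp.
  assert (Hpm : 0 <= p / m) by (apply Rlt_le, Rdiv_lt_0_compat; lra).
  assert (Hmp : 0 <= m / p) by (apply Rlt_le, Rdiv_lt_0_compat; lra).
  assert (A1 : sqrt (p / m) * sqrt (m * p) = p).
  { rewrite <- sqrt_mult by nra. replace (p / m * (m * p)) with (p * p) by (field; lra).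
    apply sqrt_square; lra. }
  assert (A2 : sqrt (m / p) * sqrt (m * p) = m).
  { rewrite <- sqrt_mult by nra. replace (m / p * (m * p)) with (m * m) by (field; lra).
    apply sqrt_square; lra. }
  assert (A3 : sqrt (p / m) * sqrt (m / p) = 1).
  { rewrite <- sqrt_mult by nra. replace (p / m * (m / p)) with 1 by (field; lra).
    apply sqrt_1. }
  assert (Hs : 0 < sqrt (m * p)) by (apply sqrt_lt_R0; nra).
  repeat split; auto.
  apply Rmult_eq_reg_r with (sqrt (m * p)); [|lra].
  transitivity (sqrt (p / m) * sqrt (m * p) * m); [ring|].
  rewrite A1. transitivity (sqrt (m / p) * sqrt (m * p) * p); [|ring]. rewrite A2. ring.
Qed.

Lemma Z_bound r w a1 b1 a2 b2 : 0 < r -> r * w = 1 ->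
  Rabs (2 * (a1 * a2 + b1 * b2)) <= r * (a1 ^ 2 + b1 ^ 2) + w * (a2 ^ 2 + b2 ^ 2).
Proof.
  intros Hr Hrw.
  assert (E1 : r * (a1 ^ 2 + b1 ^ 2) + w * (a2 ^ 2 + b2 ^ 2) - 2 * (a1 * a2 + b1 * b2)
     = r * ((a1 - w * a2) ^ 2 + (b1 - w * b2) ^ 2)).
  { transitivity (r * ((a1 - w * a2) ^ 2 + (b1 - w * b2) ^ 2) + (1 - r * w) * (w * (a2^2+b2^2) - 2 * (a1 * a2 + b1 * b2))); [ring|]. rewrite Hrw. ring. }
  assert (E2 : r * (a1 ^ 2 + b1 ^ 2) + w * (a2 ^ 2 + b2 ^ 2) + 2 * (a1 * a2 + b1 * b2)
     = r * ((a1 + w * a2) ^ 2 + (b1 + w * b2) ^ 2)).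
  { transitivity (r * ((a1 + w * a2) ^ 2 + (b1 + w * b2) ^ 2) + (1 - r * w) * (w * (a2^2+b2^2) + 2 * (a1 * a2 + b1 * b2))); [ring|]. rewrite Hrw. ring. }
  assert (0 <= r * ((a1 - w * a2) ^ 2 + (b1 - w * b2) ^ 2)) by (apply Rmult_le_pos; [lra| apply Rplus_le_le_0_compat; apply pow2_ge_0]).
  assert (0 <= r * ((a1 + w * a2) ^ 2 + (b1 + w * b2) ^ 2)) by (apply Rmult_le_pos; [lra| apply Rplus_le_le_0_compat; apply pow2_ge_0]).
  apply Rabs_le. lra.
Qed.

Lemma key r w S dr dw dS X Y Z rho sig :
  0 < r -> 0 < w -> 0 <= X -> 0 <= Y -> Rabs (2 * Z) <= r * X + w * Y -> S ^ 2 <= 1 ->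
  Rabs dr <= rho * r -> Rabs dw <= rho * w -> Rabs dS <= sig ->
  Rabs (dr * X + dS * Z + dw * Y) <= (2 * rho + sig) * (r * X + S * Z + w * Y)
  /\ (r * X + w * Y) / 2 <= r * X + S * Z + w * Y
  /\ r * X + S * Z + w * Y <= 3 * (r * X + w * Y) / 2.
Proof.
  intros Hr Hw HX HY HZ HS Hdr Hdw HdS.
  set (T := r * X + w * Y).
  assert (HT : 0 <= T) by (unfold T; nra).
  assert (HSa : Rabs S <= 1).
  { apply Rsqr_le_abs_1 in HS || idtac.
    apply Rle_trans with (Rabs 1); [apply Rsqr_le_abs_0; unfold Rsqr; nra|rewrite Rabs_R1; lra]. }
  assert (HSZ : Rabs (S * Z) <= T / 2).
  { rewrite Rabs_mult. assert (Rabs Z <= T / 2).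
    { rewrite Rabs_mult, Rabs_right in HZ by lra. fold T in HZ. lra. }
    pose proof (Rabs_pos S). pose proof (Rabs_pos Z). nra. }
  assert (Hl : T / 2 <= r * X + S * Z + w * Y).
  { pose proof (Rabs_le_between (S*Z) (T/2)) as [HH _]. specialize (HH HSZ). unfold T in *. lra. }
  assert (Hu : r * X + S * Z + w * Y <= 3 * T / 2).
  { pose proof (Rabs_le_between (S*Z) (T/2)) as [HH _]. specialize (HH HSZ). unfold T in *. lra. }
  split; [|split; [exact Hl|exact Hu]].
  assert (rho >= 0 \/ rho < 0) by lra.
  assert (0 <= rho) by (pose proof (Rabs_pos dr); nra).
  assert (0 <= sig) by (pose proof (Rabs_pos dS); lra).
  eapply Rle_trans; [apply Rabs_triang|]. eapply Rle_trans; [apply Rplus_le_compat_r; apply Rabs_triang|].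
  rewrite !Rabs_mult, (Rabs_right X), (Rabs_right Y) by lra.
  assert (Rabs Z <= T / 2) by (rewrite Rabs_mult, Rabs_right in HZ by lra; fold T in HZ; lra).
  pose proof (Rabs_pos Z).
  assert (Rabs dr * X <= rho * r * X) by nra.
  assert (Rabs dw * Y <= rho * w * Y) by nra.
  assert (Rabs dS * Rabs Z <= sig * (T / 2)) by (pose proof (Rabs_pos dS); nra).
  assert (rho * T <= 2 * rho * (T / 2)) by lra.
  assert (2 * rho * (T/2) + sig * (T/2) <= (2 * rho + sig) * (r * X + S * Z + w * Y)) by nra.
  unfold T in *. nra.
Qed.
Lemma dr_help R dR L : 1 <= R -> Rabs dR <= L -> Rabs (dR / (2 * sqrt R)) <= (L / 2) * sqrt R.
Proof.
  intros H1 H2. assert (Hs : 1 <= sqrt R) by (rewrite <- sqrt_1; apply sqrt_le_1_alt; lra).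
  assert (Hs2 : sqrt R * sqrt R = R) by (apply sqrt_sqrt; lra).
  unfold Rdiv. rewrite Rabs_mult, Rabs_inv, (Rabs_right (2 * sqrt R)) by lra.
  apply Rle_trans with (L * / (2 * sqrt R)).
  { apply Rmult_le_compat_r; [apply Rlt_le, Rinv_0_lt_compat; lra|lra]. }
  replace (L * / (2 * sqrt R)) with ((L / 2) * sqrt R * / R) by (set (u := sqrt R) in *; rewrite <- Hs2; field; lra).
  pose proof (Rabs_pos dR).
  assert (0 <= L / 2 * sqrt R) by (apply Rmult_le_pos; lra).
  apply Rle_trans with (L / 2 * sqrt R * 1); [|lra].
  apply Rmult_le_compat_l; [lra|]. rewrite <- Rinv_1. apply Rinv_le_contravar; lra.
Qed.

Lemma dw_help R dR L : 1 <= R -> Rabs dR <= L -> Rabs ((- dR / R ^ 2) / (2 * sqrt (/ R))) <= (L / 2) * sqrt (/ R).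
Proof.
  intros H1 H2. assert (Hs : 1 <= sqrt R) by (rewrite <- sqrt_1; apply sqrt_le_1_alt; lra).
  assert (Hs2 : sqrt R * sqrt R = R) by (apply sqrt_sqrt; lra).
  rewrite sqrt_inv. 
  replace ((- dR / R ^ 2) / (2 * / sqrt R)) with (- (dR / (2 * sqrt R)) * / R)
    by (set (u := sqrt R) in *; rewrite <- Hs2; field; lra).
  rewrite Rabs_mult, Rabs_Ropp, (Rabs_right (/ R)) by (apply Rle_ge, Rlt_le, Rinv_0_lt_compat; lra).
  pose proof (dr_help R dR L H1 H2).
  replace (L / 2 * / sqrt R) with (L / 2 * sqrt R * / R) by (set (u := sqrt R) in *; rewrite <- Hs2; field; lra).
  apply Rmult_le_compat_r; [apply Rlt_le, Rinv_0_lt_compat; lra|lra].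
Qed.

Lemma q_ge1 (k : Z) : k <> 0%Z -> 1 <= IZR k ^ 2.
Proof.
  intros Hk. replace (IZR k ^ 2) with (IZR (k * k)) by (rewrite mult_IZR; ring). apply IZR_le.
  nia.
Qed.

Lemma alpha_ge k xi t : IZR k ^ 2 <= alpha k xi t.
Proof. unfold alpha. pose proof (pow2_ge_0 (xi - IZR k * t)). lra. Qed.

Lemma dalpha_sq k xi t : dalpha k xi t ^ 2 <= 4 * IZR k ^ 2 * (alpha k xi t - IZR k ^ 2).
Proof. unfold dalpha, alpha. right. ring. Qed.

Lemma alpha_deriv k xi t : is_derive (alpha k xi) t (dalpha k xi t).
Proof. unfold alpha, dalpha. auto_derive; [auto|ring]. Qed.

Lemma dalpha_deriv k xi t : is_derive (dalpha k xi) t (2 * IZR k ^ 2).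
Proof. unfold dalpha. auto_derive; [auto|ring]. Qed.

Section Conc.
Variables (c B g : R) (k : Z) (xi : R).
Hypotheses (hc : 0 < c) (hB : 0 < B) (hg : 0 < g) (hk : k <> 0%Z).
Let q := IZR k ^ 2.
Let hq : 1 <= q := q_ge1 k hk.

Lemma apos t : 0 < alpha k xi t.
Proof. pose proof (alpha_ge k xi t). fold q in H. lra. Qed.

Ltac side Ha := repeat split;
  try (match goal with |- ex_derive (fun x => alpha _ _ x) ?t => exists (dalpha k xi t); apply alpha_deriv end);
  try (match goal with |- ex_derive (fun x => dalpha _ _ x) ?t => exists (2 * IZR k ^ 2); apply dalpha_deriv end);
  try (apply Rgt_not_eq; repeat apply Rmult_lt_0_compat; (lra || (apply pow_lt; lra) || nra)).

Ltac fin_der t := replace (Derive (fun x => alpha k xi x) t) with (dalpha k xi t)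
     by (symmetry; apply is_derive_unique; apply alpha_deriv);
  try replace (Derive (fun x => dalpha k xi x) t) with (2 * IZR k ^ 2)
     by (symmetry; apply is_derive_unique; apply dalpha_deriv).

Lemma Rv_deriv t : is_derive (fun s => Rv c B g q (alpha k xi s)) t (dRv c B g q (alpha k xi t) (dalpha k xi t)).
Proof.
  pose proof (apos t) as Ha. unfold Rv, dRv. auto_derive.
  all: side Ha. all: fin_der t; field; repeat split; lra.
Qed.

Lemma Mv_deriv t : is_derive (fun s => Mv c B g q (alpha k xi s)) t (dMv c B g q (alpha k xi t) (dalpha k xi t)).
Proof.
  pose proof (apos t) as Ha. unfold Mv, dMv. auto_derive.
  all: side Ha. all: fin_der t. all: field. all: repeat split; lra.
Qed.

Lemma hv_deriv t : is_derive (fun s => 2 * hv (alpha k xi s) (dalpha k xi s)) t (2 * dhv q (alpha k xi t) (dalpha k xi t)).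
Proof.
  pose proof (apos t) as Ha. unfold hv, dhv. auto_derive.
  all: side Ha. all: fin_der t. all: unfold q; field. all: repeat split; lra.
Qed.

End Conc.

Lemma closed_forms e mp Tp Tm k xi t : 0 < e -> 0 < mp -> 0 < Tp -> 0 < Tm -> k <> 0%Z ->
  0 < m1 mp Tp k xi t /\ 0 < p1 e mp Tp Tm k xi t /\
  p1 e mp Tp Tm k xi t / m1 mp Tp k xi t
    = Rv (sqrt (Tp / mp)) (4 * PI * e ^ 2 / sqrt (mp * Tp)) (4 * PI * e ^ 2 / Tm) (IZR k ^ 2) (alpha k xi t) /\
  m1 mp Tp k xi t * p1 e mp Tp Tm k xi t
    = Mv (sqrt (Tp / mp)) (4 * PI * e ^ 2 / sqrt (mp * Tp)) (4 * PI * e ^ 2 / Tm) (IZR k ^ 2) (alpha k xi t).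
Proof.
  intros he hmp hTp hTm hk.
  assert (Ha : 0 < alpha k xi t) by (pose proof (alpha_ge k xi t); pose proof (q_ge1 k hk); lra).
  assert (hc : 0 < sqrt (Tp / mp)) by (apply sqrt_lt_R0; apply Rdiv_lt_0_compat; lra).
  assert (hs2 : sqrt (mp / Tp) = / sqrt (Tp / mp)).
  { rewrite <- sqrt_inv. f_equal. field. lra. }
  assert (hB : 0 < 4 * PI * e ^ 2 / sqrt (mp * Tp)).
  { apply Rdiv_lt_0_compat; [pose proof PI_RGT_0; assert (0 < e^2) by (apply pow_lt; lra); nra|apply sqrt_lt_R0; nra]. }
  assert (hg : 0 < 4 * PI * e ^ 2 / Tm).
  { apply Rdiv_lt_0_compat; [pose proof PI_RGT_0; assert (0 < e^2) by (apply pow_lt; lra); nra|lra]. }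
  unfold m1, p1, Rv, Mv. rewrite hs2.
  set (c := sqrt (Tp / mp)) in *. set (B := 4 * PI * e ^ 2 / sqrt (mp * Tp)) in *.
  set (g := 4 * PI * e ^ 2 / Tm) in *. set (a := alpha k xi t) in *.
  assert (Hu : 0 < sqrt a) by (apply sqrt_lt_R0; lra).
  assert (Hu2 : sqrt a ^ 2 = a) by (apply pow2_sqrt; lra).
  set (u := sqrt a) in *. rewrite <- Hu2.
  assert (0 < u ^ 2 + g) by (assert (0 < u^2) by (apply pow_lt; lra); lra).
  assert (0 < u ^ 3) by (apply pow_lt; lra).
  assert (0 < IZR k ^ 2) by (pose proof (q_ge1 k hk); lra).
  split; [nra|]. split.
  { assert (0 < B * (u / (u ^ 2 + g))) by (apply Rmult_lt_0_compat; [lra|apply Rdiv_lt_0_compat; lra]).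
    assert (0 < / c * (2 * IZR k ^ 2 / u ^ 3)) by (apply Rmult_lt_0_compat; [apply Rinv_0_lt_compat; lra|apply Rdiv_lt_0_compat; lra]).
    nra. }
  split; field; repeat split; lra.
Qed.

Section Main.
Variables e mp Tp Tm : R.
Hypotheses (he : 0 < e) (hmp : 0 < mp) (hTp : 0 < Tp) (hTm : 0 < Tm).
Variables (k : Z) (xi : R) (A1 A2 : R -> C).
Hypothesis (hk : k <> 0%Z).

Definition cc := sqrt (Tp / mp).
Definition BB := 4 * PI * e ^ 2 / sqrt (mp * Tp).
Definition gg := 4 * PI * e ^ 2 / Tm.
Definition qq := IZR k ^ 2.

Lemma hc : 0 < cc. Proof. apply sqrt_lt_R0; apply Rdiv_lt_0_compat; lra. Qed.
Lemma hB : 0 < BB.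
Proof. apply Rdiv_lt_0_compat; [pose proof PI_RGT_0; assert (0 < e^2) by (apply pow_lt; lra); nra|apply sqrt_lt_R0; nra]. Qed.
Lemma hg : 0 < gg.
Proof. apply Rdiv_lt_0_compat; [pose proof PI_RGT_0; assert (0 < e^2) by (apply pow_lt; lra); nra|lra]. Qed.

Ltac hyps := first [exact hc|exact hB|exact hg|apply q_ge1; auto|apply alpha_ge|apply dalpha_sq].

Definition al s := alpha k xi s.
Definition rf s := sqrt (p1 e mp Tp Tm k xi s / m1 mp Tp k xi s).
Definition wf s := sqrt (m1 mp Tp k xi s / p1 e mp Tp Tm k xi s).
Definition Sf s := 2 * h1 k xi s / sqrt (m1 mp Tp k xi s * p1 e mp Tp Tm k xi s).
Definition RR s := Rv cc BB gg qq (al s).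
Definition MM s := Mv cc BB gg qq (al s).
Definition dr s := dRv cc BB gg qq (al s) (dalpha k xi s) / (2 * sqrt (RR s)).
Definition dw s := (- dRv cc BB gg qq (al s) (dalpha k xi s) / RR s ^ 2) / (2 * sqrt (/ RR s)).
Definition dS s := (2 * dhv qq (al s) (dalpha k xi s) * sqrt (MM s)
   - 2 * hv (al s) (dalpha k xi s) * (dMv cc BB gg qq (al s) (dalpha k xi s) / (2 * sqrt (MM s)))) / sqrt (MM s) ^ 2.

Lemma cl s : 0 < m1 mp Tp k xi s /\ 0 < p1 e mp Tp Tm k xi s /\
  p1 e mp Tp Tm k xi s / m1 mp Tp k xi s = RR s /\ m1 mp Tp k xi s * p1 e mp Tp Tm k xi s = MM s.
Proof. apply closed_forms; auto. Qed.

Lemma RR_ge1 s : 1 <= RR s.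
Proof.
  eapply Rv_ge1; hyps.
Qed.

Lemma MM_pos s : 0 < MM s.
Proof.
  eapply Mv_pos; hyps.
Qed.

Lemma rf_der s : is_derive rf s (dr s).
Proof.
  apply is_derive_ext with (fun s => sqrt (RR s)).
  { intros t. unfold rf. destruct (cl t) as [_ [_ [E _]]]. rewrite E. reflexivity. }
  unfold dr. apply is_derive_sqrt; [|pose proof (RR_ge1 s); lra].
  unfold RR, al. apply (Rv_deriv cc BB gg k xi hc hg hk s).
Qed.

Lemma wf_der s : is_derive wf s (dw s).
Proof.
  apply is_derive_ext with (fun s => sqrt (/ RR s)).
  { intros t. unfold wf. destruct (cl t) as [Hm [Hp [E _]]]. rewrite <- E. f_equal. field. lra. }
  unfold dw. pose proof (RR_ge1 s).
  apply (is_derive_sqrt (fun s => / RR s)); [|apply Rinv_0_lt_compat; lra].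
  apply (is_derive_inv RR); [|lra].
  unfold RR, al. apply (Rv_deriv cc BB gg k xi hc hg hk s).
Qed.

Lemma Sf_der s : is_derive Sf s (dS s).
Proof.
  apply is_derive_ext with (fun s => (2 * hv (al s) (dalpha k xi s)) / sqrt (MM s)).
  { intros t. unfold Sf. destruct (cl t) as [_ [_ [_ E]]]. rewrite E. reflexivity. }
  unfold dS. pose proof (MM_pos s).
  apply (is_derive_div (fun s => 2 * hv (al s) (dalpha k xi s)) (fun s => sqrt (MM s))).
  - apply (hv_deriv k xi hk s).
  - apply (is_derive_sqrt MM); [|lra]. unfold MM, al. apply (Mv_deriv cc BB gg k xi hg hk s).
  - apply Rgt_not_eq. apply sqrt_lt_R0. lra.
Qed.


Definition a1 s := fst (A1 s).
Definition b1 s := snd (A1 s).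
Definition a2 s := fst (A2 s).
Definition b2 s := snd (A2 s).
Definition XX s := a1 s ^ 2 + b1 s ^ 2.
Definition YY s := a2 s ^ 2 + b2 s ^ 2.
Definition ZZ s := a1 s * a2 s + b1 s * b2 s.
Definition Ef := Energy_plus e mp Tp Tm k xi A1 A2.

Lemma E_eq s : Ef s = rf s * XX s + Sf s * ZZ s + wf s * YY s.
Proof.
  unfold Ef, Energy_plus, rf, Sf, wf, XX, YY, ZZ, a1, b1, a2, b2.
  rewrite !Cmod2_alt. unfold Re, Im, Cmult, Cconj. simpl. ring.
Qed.

Lemma ids s : rf s * m1 mp Tp k xi s = wf s * p1 e mp Tp Tm k xi s /\ Sf s * p1 e mp Tp Tm k xi s = 2 * h1 k xi s * rf s /\ Sf s * m1 mp Tp k xi s = 2 * h1 k xi s * wf s /\ rf s * wf s = 1.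
Proof.
  destruct (cl s) as [Hm [Hp _]].
  destruct (sqrt_ids _ _ Hm Hp) as [I1 [I2 [I3 I4]]].
  assert (Hs : 0 < sqrt (m1 mp Tp k xi s * p1 e mp Tp Tm k xi s)) by (apply sqrt_lt_R0; nra).
  unfold rf, wf, Sf.
  set (sg := sqrt (m1 mp Tp k xi s * p1 e mp Tp Tm k xi s)) in *.
  set (r := sqrt (p1 e mp Tp Tm k xi s / m1 mp Tp k xi s)) in *.
  set (w := sqrt (m1 mp Tp k xi s / p1 e mp Tp Tm k xi s)) in *.
  repeat split.
  - exact I1.
  - rewrite <- I2. field. lra.
  - rewrite <- I3. field. lra.
  - exact I4.
Qed.

Hypothesis Hsol : is_solution e mp Tp Tm k xi A1 A2.

Definition dE s := dr s * XX s + dS s * ZZ s + dw s * YY s.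

Lemma E_der s : 0 < s -> is_derive Ef s (dE s).
Proof.
  intros Hs. destruct Hsol as [Hd _]. destruct (Hd s Hs) as [D1 D2].
  pose proof (deriv_fst _ _ _ D1) as Da1. pose proof (deriv_snd _ _ _ D1) as Db1.
  pose proof (deriv_fst _ _ _ D2) as Da2. pose proof (deriv_snd _ _ _ D2) as Db2.
  simpl in Da1, Db1, Da2, Db2.
  set (h := h1 k xi s) in *. set (m := m1 mp Tp k xi s) in *. set (p := p1 e mp Tp Tm k xi s) in *.
  replace ((- h * fst (A1 s) - 0 * snd (A1 s)) + (- m * fst (A2 s) - 0 * snd (A2 s)))
    with (- h * a1 s - m * a2 s) in Da1 by (unfold a1, a2; ring).
  replace ((- h * snd (A1 s) + 0 * fst (A1 s)) + (- m * snd (A2 s) + 0 * fst (A2 s)))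
    with (- h * b1 s - m * b2 s) in Db1 by (unfold b1, b2; ring).
  replace ((p * fst (A1 s) - 0 * snd (A1 s)) + (h * fst (A2 s) - 0 * snd (A2 s)))
    with (p * a1 s + h * a2 s) in Da2 by (unfold a1, a2; ring).
  replace ((p * snd (A1 s) + 0 * fst (A1 s)) + (h * snd (A2 s) + 0 * fst (A2 s)))
    with (p * b1 s + h * b2 s) in Db2 by (unfold b1, b2; ring).
  apply is_derive_ext with (fun t => rf t * (a1 t ^ 2 + b1 t ^ 2) + Sf t * (a1 t * a2 t + b1 t * b2 t) + wf t * (a2 t ^ 2 + b2 t ^ 2)).
  { intros t. rewrite E_eq. reflexivity. }
  pose proof (E_deriv rf Sf wf a1 b1 a2 b2 s _ _ _ _ _ _ _ (rf_der s) (Sf_der s) (wf_der s) Da1 Db1 Da2 Db2) as HE.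
  destruct (ids s) as [I1 [I2 [I3 _]]]. fold h m p in I1, I2, I3.
  pose proof (E_cancel (rf s) (Sf s) (wf s) m p h (a1 s) (b1 s) (a2 s) (b2 s) (dr s) (dS s) (dw s) I1 I2 I3) as HC.
  cbv zeta in HC. rewrite HC in HE. unfold dE, XX, YY, ZZ. exact HE.
Qed.


Definition KK := BB / cc + 4 / cc ^ 2 + 3 / cc + BB / (cc ^ 2 * gg).

Lemma rf_eq s : rf s = sqrt (RR s).
Proof. unfold rf. destruct (cl s) as [_ [_ [E _]]]. rewrite E. reflexivity. Qed.
Lemma wf_eq s : wf s = sqrt (/ RR s).
Proof. unfold wf. destruct (cl s) as [Hm [Hp [E _]]]. rewrite <- E. f_equal. field. lra. Qed.
Lemma Sf_eq s : Sf s = 2 * hv (al s) (dalpha k xi s) / sqrt (MM s).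
Proof. unfold Sf. destruct (cl s) as [_ [_ [_ E]]]. rewrite E. reflexivity. Qed.

Lemma pieces s : 0 < rf s /\ 0 < wf s /\ rf s * wf s = 1 /\ Sf s ^ 2 <= 1 /\ 1 <= rf s /\ rf s <= Rmx cc BB gg.
Proof.
  pose proof (RR_ge1 s) as HR.
  assert (Hr : 1 <= rf s) by (rewrite rf_eq; rewrite <- sqrt_1; apply sqrt_le_1_alt; lra).
  destruct (ids s) as [_ [_ [_ I4]]].
  assert (Hw : 0 < wf s) by (rewrite wf_eq; apply sqrt_lt_R0; apply Rinv_0_lt_compat; lra).
  repeat split; try lra.
  - rewrite Sf_eq. pose proof (MM_pos s).
    eapply (S_sq cc BB gg); try hyps; first [exact hk | apply sqrt_lt_R0; lra | apply pow2_sqrt; apply Rlt_le, MM_pos].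
  - rewrite rf_eq. apply Rle_trans with (RR s).
    + assert (sqrt (RR s) * sqrt (RR s) = RR s) by (apply sqrt_sqrt; lra).
      assert (1 <= sqrt (RR s)) by (rewrite <- sqrt_1; apply sqrt_le_1_alt; lra). nra.
    + unfold RR. eapply Rv_le; hyps.
Qed.

Lemma bound s : Rabs (dE s) <= (KK * (qq / al s)) * Ef s
  /\ (rf s * XX s + wf s * YY s) / 2 <= Ef s /\ Ef s <= 3 * (rf s * XX s + wf s * YY s) / 2.
Proof.
  destruct (pieces s) as [Hr [Hw [Hrw [HS _]]]].
  pose proof (RR_ge1 s) as HR. pose proof (MM_pos s) as HM.
  set (L := (BB / cc + 4 / cc ^ 2) * (qq / al s)).
  assert (HL : Rabs (dRv cc BB gg qq (al s) (dalpha k xi s)) <= L) by (unfold L; eapply dRv_bound; hyps).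
  assert (Hdr : Rabs (dr s) <= L / 2 * rf s) by (rewrite rf_eq; unfold dr; apply dr_help; auto).
  assert (Hdw : Rabs (dw s) <= L / 2 * wf s) by (rewrite wf_eq; unfold dw; apply dw_help; auto).
  assert (HdS : Rabs (dS s) <= (3 / cc + BB / (cc ^ 2 * gg)) * (qq / al s)).
  { unfold dS. eapply dS_bound; try hyps; first [exact hk | apply sqrt_lt_R0; lra | apply pow2_sqrt; apply Rlt_le, MM_pos]. }
  assert (HX : 0 <= XX s) by (unfold XX; apply Rplus_le_le_0_compat; apply pow2_ge_0).
  assert (HY : 0 <= YY s) by (unfold YY; apply Rplus_le_le_0_compat; apply pow2_ge_0).
  assert (HZ : Rabs (2 * ZZ s) <= rf s * XX s + wf s * YY s) by (unfold ZZ, XX, YY; apply Z_bound; auto).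
  destruct (key (rf s) (wf s) (Sf s) (dr s) (dw s) (dS s) (XX s) (YY s) (ZZ s) (L / 2)
     ((3 / cc + BB / (cc ^ 2 * gg)) * (qq / al s)) Hr Hw HX HY HZ HS Hdr Hdw HdS) as [K1 [K2 K3]].
  rewrite E_eq. split; [|split; auto].
  unfold dE. replace (KK * (qq / al s)) with (2 * (L / 2) + (3 / cc + BB / (cc ^ 2 * gg)) * (qq / al s))
    by (unfold KK, L; field; pose proof hc; pose proof hg; pose proof (apos k xi hk s); unfold al; repeat split; lra).
  exact K1.
Qed.


Lemma rc_E : rc Ef.
Proof.
  destruct Hsol as [_ [H1 H2]].
  assert (Ra1 : rc a1) by (apply (rc_fst A1 H1)).
  assert (Rb1 : rc b1) by (apply (rc_snd A1 H1)).
  assert (Ra2 : rc a2) by (apply (rc_fst A2 H2)).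
  assert (Rb2 : rc b2) by (apply (rc_snd A2 H2)).
  assert (Rr : rc rf) by (apply rc_cont; apply (ex_derive_continuous (K:=R_AbsRing) (V:=R_NormedModule) rf); eexists; apply rf_der).
  assert (Rw : rc wf) by (apply rc_cont; apply (ex_derive_continuous (K:=R_AbsRing) (V:=R_NormedModule) wf); eexists; apply wf_der).
  assert (RS : rc Sf) by (apply rc_cont; apply (ex_derive_continuous (K:=R_AbsRing) (V:=R_NormedModule) Sf); eexists; apply Sf_der).
  assert (Rsq : forall f, rc f -> rc (fun t => f t ^ 2)).
  { intros f Hf. eapply rc_ext; [|apply (rc_mult f f Hf Hf)]. intros; simpl; ring. }
  eapply rc_ext; [intros t; symmetry; apply E_eq|].
  apply rc_plus; [apply rc_plus|]; apply rc_mult; auto; unfold XX, YY, ZZ.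
  - apply rc_plus; apply Rsq; auto.
  - apply rc_plus; apply rc_mult; auto.
  - apply rc_plus; apply Rsq; auto.
Qed.

Definition PP s := - KK * atan ((xi - IZR k * s) / IZR k).
Definition dPP s := KK * (qq / al s).

Lemma PP_der s : is_derive PP s (dPP s).
Proof.
  unfold PP, dPP, qq, al, alpha. assert (Hk : IZR k <> 0) by (apply not_0_IZR; auto).
  auto_derive; [auto|].
  pose proof (pow2_ge_0 (xi - IZR k * s)). pose proof (q_ge1 k hk).
  replace (1 + (xi + - (IZR k * s)) * / IZR k * ((xi + - (IZR k * s)) * / IZR k * 1))
    with ((IZR k ^ 2 + (xi - IZR k * s) ^ 2) / IZR k ^ 2) by (field; auto).
  field. split; auto. lra.
Qed.

Lemma PP_range s t : Rabs (PP t - PP s) <= KK * PI.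
Proof.
  unfold PP. pose proof (atan_bound ((xi - IZR k * t) / IZR k)).
  pose proof (atan_bound ((xi - IZR k * s) / IZR k)).
  assert (0 < KK) by (unfold KK; pose proof hc; pose proof hB; pose proof hg;
    assert (0 < BB / cc) by (apply Rdiv_lt_0_compat; lra);
    assert (0 < 4 / cc ^ 2) by (apply Rdiv_lt_0_compat; [lra|apply pow_lt; lra]);
    assert (0 < 3 / cc) by (apply Rdiv_lt_0_compat; lra);
    assert (0 < BB / (cc ^ 2 * gg)) by (apply Rdiv_lt_0_compat; [lra|apply Rmult_lt_0_compat; [apply pow_lt|]; lra]);
    lra).
  apply Rabs_le. split; nra.
Qed.

Lemma gron_E t : 0 <= t -> Ef t * exp (- PP t) <= Ef 0 * exp (- PP 0) /\ Ef 0 * exp (PP 0) <= Ef t * exp (PP t).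
Proof.
  apply (gronwall Ef PP dE dPP).
  - apply E_der.
  - apply PP_der.
  - intros s _. destruct (bound s) as [B1 _]. exact B1.
  - apply rc_E.
Qed.

End Main.

Lemma KK_pos e mp Tp Tm : 0 < e -> 0 < mp -> 0 < Tp -> 0 < Tm -> 0 < KK e mp Tp Tm.
Proof.
  intros. unfold KK. pose proof (hc mp Tp H0 H1); pose proof (hB e mp Tp H H0 H1); pose proof (hg e Tm H H2).
    assert (0 < BB e mp Tp / cc mp Tp) by (apply Rdiv_lt_0_compat; lra).
    assert (0 < 4 / cc mp Tp ^ 2) by (apply Rdiv_lt_0_compat; [lra|apply pow_lt; lra]).
    assert (0 < 3 / cc mp Tp) by (apply Rdiv_lt_0_compat; lra).
    assert (0 < BB e mp Tp / (cc mp Tp ^ 2 * gg e Tm)) by (apply Rdiv_lt_0_compat; [lra|apply Rmult_lt_0_compat; [apply pow_lt|]; lra]).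
    lra.
Qed.

Lemma exp_mono x y : x <= y -> exp x <= exp y.
Proof. intros H; destruct (Rle_lt_or_eq_dec x y H) as [h|h]; [left; apply exp_increasing; auto| rewrite h; lra]. Qed.

Lemma final_arith Rm C N0 Nt E0 Et : 1 <= Rm -> 1 <= C -> 0 <= N0 -> 0 <= Nt ->
  N0 <= 2 * Rm * E0 -> 2 * E0 <= 3 * Rm * N0 -> Nt <= 2 * Rm * Et -> 2 * Et <= 3 * Rm * Nt ->
  Et <= C * E0 -> E0 <= C * Et ->
  Nt <= 3 * Rm ^ 2 * C * N0 /\ N0 <= 3 * Rm ^ 2 * C * Nt.
Proof.
  intros. split.
  - assert (2 * Rm * Et <= 2 * Rm * (C * E0)) by nra.
    assert (2 * Rm * C * E0 <= Rm * C * (3 * Rm * N0)) by (assert (0 <= Rm * C) by nra; nra).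
    nra.
  - assert (2 * Rm * E0 <= 2 * Rm * (C * Et)) by nra.
    assert (2 * Rm * C * Et <= Rm * C * (3 * Rm * Nt)) by (assert (0 <= Rm * C) by nra; nra).
    nra.
Qed.

Lemma normA_eq A1 A2 s : normA A1 A2 s = sqrt (XX A1 s + YY A2 s).
Proof. unfold normA, XX, YY, a1, b1, a2, b2. rewrite !Cmod2_alt. reflexivity. Qed.

Theorem lemma3p1 (e mp Tp Tm : R) (he : 0 < e) (hmp : 0 < mp) (hTp : 0 < Tp) (hTm : 0 < Tm) :
  exists C1 C1' C2 C2' : R,
    0 < C1 /\ C1 <= C1' /\ 0 < C2 /\ C2 <= C2' /\
    forall (k : Z) (xi : R) (A1 A2 : R -> C),
      k <> 0%Z ->
      is_solution e mp Tp Tm k xi A1 A2 ->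
      forall t : R, 0 <= t ->
        C1 * Energy_plus e mp Tp Tm k xi A1 A2 0 <= Energy_plus e mp Tp Tm k xi A1 A2 t /\
        Energy_plus e mp Tp Tm k xi A1 A2 t <= C1' * Energy_plus e mp Tp Tm k xi A1 A2 0 /\
        C2 * normA A1 A2 0 <= normA A1 A2 t /\
        normA A1 A2 t <= C2' * normA A1 A2 0.
Proof.
  set (K := KK e mp Tp Tm). set (Rm := Rmx (cc mp Tp) (BB e mp Tp) (gg e Tm)).
  assert (HK : 0 < K) by (apply KK_pos; auto).
  assert (HRm : 1 <= Rm).
  { unfold Rm. destruct (pieces e mp Tp Tm he hmp hTp hTm 1%Z 0 ltac:(discriminate) 0) as [_ [_ [_ [_ [P1 P2]]]]]. lra. }
  set (C := exp (K * PI)).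
  assert (HC : 1 <= C).
  { unfold C. rewrite <- exp_0. apply exp_mono. pose proof PI_RGT_0; nra. }
  set (D := 3 * Rm ^ 2 * C).
  assert (HD : 1 <= D) by (unfold D; assert (1 <= Rm ^ 2) by nra; nra).
  assert (HsD : 1 <= sqrt D) by (rewrite <- sqrt_1; apply sqrt_le_1_alt; lra).
  exists (/ C), C, (/ sqrt D), (sqrt D).
  split; [apply Rinv_0_lt_compat; lra|].
  split; [apply Rle_trans with 1; [rewrite <- Rinv_1; apply Rinv_le_contravar; lra|lra]|].
  split; [apply Rinv_0_lt_compat; lra|].
  split; [apply Rle_trans with 1; [rewrite <- Rinv_1; apply Rinv_le_contravar; lra|lra]|].
  intros k xi A1 A2 hk Hsol t Ht.
  fold (Ef e mp Tp Tm k xi A1 A2).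
  destruct (gron_E e mp Tp Tm he hmp hTp hTm k xi A1 A2 hk Hsol t Ht) as [G1 G2].
  pose proof (PP_range e mp Tp Tm he hmp hTp hTm k xi 0 t) as Hr. fold K in Hr.
  set (E0 := Ef e mp Tp Tm k xi A1 A2 0) in *. set (Et := Ef e mp Tp Tm k xi A1 A2 t) in *.
  set (P0 := PP e mp Tp Tm k xi 0) in *. set (Pt := PP e mp Tp Tm k xi t) in *.
  assert (SW : forall s, XX A1 s + YY A2 s <= 2 * Rm * Ef e mp Tp Tm k xi A1 A2 s /\
     2 * Ef e mp Tp Tm k xi A1 A2 s <= 3 * Rm * (XX A1 s + YY A2 s) /\ 0 <= Ef e mp Tp Tm k xi A1 A2 s
     /\ 0 <= XX A1 s + YY A2 s).
  { intros s. destruct (pieces e mp Tp Tm he hmp hTp hTm k xi hk s) as [Pr [Pw [Prw [_ [P1 P2]]]]].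
    destruct (bound e mp Tp Tm he hmp hTp hTm k xi A1 A2 hk s) as [_ [B2 B3]].
    fold Rm in P2.
    assert (HX : 0 <= XX A1 s) by (unfold XX; apply Rplus_le_le_0_compat; apply pow2_ge_0).
    assert (HY : 0 <= YY A2 s) by (unfold YY; apply Rplus_le_le_0_compat; apply pow2_ge_0).
    assert (Hw1 : wf e mp Tp Tm k xi s <= 1) by nra.
    assert (Hw2 : 1 <= Rm * wf e mp Tp Tm k xi s) by nra.
    set (r := rf e mp Tp Tm k xi s) in *. set (w := wf e mp Tp Tm k xi s) in *.
    set (X := XX A1 s) in *. set (Y := YY A2 s) in *.
    assert (X + Y <= Rm * (r * X + w * Y)) by nra.
    assert (r * X + w * Y <= Rm * (X + Y)) by nra.
    repeat split; nra. }
  assert (HE1 : Et <= C * E0).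
  { assert (Et = Et * exp (- Pt) * exp Pt) by (rewrite Rmult_assoc, <- exp_plus; replace (- Pt + Pt) with 0 by ring; rewrite exp_0; ring).
    assert (Et * exp (- Pt) * exp Pt <= E0 * exp (- P0) * exp Pt) by (apply Rmult_le_compat_r; [apply Rlt_le, exp_pos|exact G1]).
    assert (E0 * exp (- P0) * exp Pt = E0 * exp (Pt - P0)) by (rewrite Rmult_assoc, <- exp_plus; f_equal; f_equal; ring).
    assert (exp (Pt - P0) <= C) by (unfold C; apply exp_mono; apply Rabs_le_between in Hr; lra).
    destruct (SW 0) as [_ [_ [HE0 _]]]. fold E0 in HE0.
    assert (E0 * exp (Pt - P0) <= E0 * C) by (apply Rmult_le_compat_l; lra).
    lra. }
  assert (HE2 : E0 <= C * Et).
  { assert (E0 = E0 * exp P0 * exp (- P0)) by (rewrite Rmult_assoc, <- exp_plus; replace (P0 + - P0) with 0 by ring; rewrite exp_0; ring).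
    assert (E0 * exp P0 * exp (- P0) <= Et * exp Pt * exp (- P0)) by (apply Rmult_le_compat_r; [apply Rlt_le, exp_pos|exact G2]).
    assert (Et * exp Pt * exp (- P0) = Et * exp (- (P0 - Pt))) by (rewrite Rmult_assoc, <- exp_plus; f_equal; f_equal; ring).
    assert (exp (- (P0 - Pt)) <= C) by (unfold C; apply exp_mono; apply Rabs_le_between in Hr; lra).
    destruct (SW t) as [_ [_ [HEt _]]]. fold Et in HEt.
    assert (Et * exp (- (P0 - Pt)) <= Et * C) by (apply Rmult_le_compat_l; lra).
    lra. }
  destruct (SW 0) as [S01 [S02 [S03 S04]]]. destruct (SW t) as [St1 [St2 [St3 St4]]].
  fold E0 in S01, S02, S03. fold Et in St1, St2, St3.
  destruct (final_arith Rm C _ _ E0 Et HRm HC S04 St4 S01 S02 St1 St2 HE1 HE2) as [F1 F2].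
  fold D in F1, F2.
  rewrite !normA_eq.
  split; [|split; [|split]].
  - apply Rmult_le_reg_l with C; [lra|].
    replace (C * (/ C * E0)) with E0 by (field; lra). lra.
  - lra.
  - apply Rmult_le_reg_l with (sqrt D); [lra|].
    replace (sqrt D * (/ sqrt D * sqrt (XX A1 0 + YY A2 0))) with (sqrt (XX A1 0 + YY A2 0)) by (field; lra).
    rewrite <- sqrt_mult by lra. apply sqrt_le_1_alt. lra.
  - rewrite <- sqrt_mult by lra. apply sqrt_le_1_alt. lra.
Qed.
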